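(* Let $\mathcal{I}$ be an interval hypergraph on $[n]$ closed under intersection. Then for every $j\in\mathcal{J}_{\mathcal{I}}$, the acyclic orientation $A_j$ is join irreducible in the lattice $P_{\mathcal{I}}$.
   Context: An interval hypergraph $\mathcal{I}$ on $[n]$ is a collection of intervals of $[n]$ containing all singletons; it is closed under intersection if $I,J\in\mathcal{I}$, $I\cap J\ne\varnothing$ imply $I\cap J\in\mathcal{I}$. An orientation is a map $O:\mathcal{I}\to[n]$ with $O(I)\in I$; it is acyclic if there are no $H_1,\dots,H_k$, $k\ge2$, with $O(H_{i+1})\in H_i\setminus\{O(H_i)\}$ for $i\in[k-1]$ and $O(H_1)\in H_k\setminus\{O(H_k)\}$. Orientations $O\ne O'$ are related by an increasing flip (from $O$ to $O'$) if there exist $1\le i<j\le n$ such that for all $H$: if $O(H)\ne O'(H)$ then $O(H)=i$, $O'(H)=j$; and if $\{i,j\}\subseteq H$ then $O(H)=i\iff O'(H)=j$. $P_{\mathcal{I}}$ is the transitive closure of the increasing flip relation on acyclic orientations (a lattice here). Let $\mathcal{J}_{\mathcal{I}}=\bigcup_{I\in\mathcal{I}}I\setminus\{\min I\}$. For $j\in\mathcal{J}_{\mathcal{I}}$ let $J_j=\bigcap\{I\in\mathcal{I}: j\in I\setminus\{\min I\}\}$ and $\mu_j=\min J_j$. For a permutation $\pi$, $\mathrm{Or}_\pi(I)=\pi(\min\{k:\pi(k)\in I\})$. Define $A_j=\mathrm{Or}_\pi$ for the permutation $\pi=1\,2\cdots(\mu_j-1)\,j\,\mu_j\cdots(j-1)\,(j+1)\cdots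 n$ (one-line notation); explicitly $A_j(J)=j$ if $j\in J$ and $\min J=\mu_j$, and $A_j(J)=\min J$ otherwise. An element of a lattice is join irreducible if it is not the minimum and covers exactly one element. *)

(* Defs.v *)
(* The ground set [n] = {1,...,n} is represented by 'I_n
   = {0,...,n-1} with its natural order (shift by one; only the order matters). *)
From mathcomp Require Import all_boot.
From Stdlib Require Import Relations.

Set Implicit Arguments.
Unset Strict Implicit.
Unset Printing Implicit Defensive.

Section Defs.
Variable n : nat.
Notation V := 'I_n.

Definition is_interval (A : {set V}) : Prop :=
  A != set0 /\
  forall x y z : V, x \in A -> z \in A -> (x <= y)%N -> (y <= z)%N -> y \in A.

Definition interval_hypergraph (I : {set {set V}}) : Prop :=
  (forall A, A \in I -> is_interval A) /\ (forall i : V, [set i] \in I).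

Definition closed_under_intersection (I : {set {set V}}) : Prop :=
  forall A B, A \in I -> B \in I -> A :&: B != set0 -> A :&: B \in I.

(* min A (for nonempty A); the default d is irrelevant for nonempty A *)
Definition minset (d : V) (A : {set V}) : V :=
  odflt d [pick i in A | [forall k in A, (val i <= val k)%N]].

Definition edge (I : {set {set V}}) := {H : {set V} | H \in I}.

Definition ormap (I : {set {set V}}) := {ffun edge I -> V}.

Definition is_orientation (I : {set {set V}}) (O : ormap I) : Prop :=
  forall H : edge I, O H \in val H.

Definition orrel (I : {set {set V}}) (O : ormap I) : rel (edge I) :=
  fun H H' => (O H' \in val H) && (O H' != O H).

Definition acyclic (I : {set {set V}}) (O : ormap I) : Prop :=
  ~ exists s : seq (edge I), (2 <= size s)%N /\ cycle (orrel O) s.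

Definition acyc_or (I : {set {set V}}) (O : ormap I) : Prop :=
  is_orientation O /\ acyclic O.

Definition incr_flip (I : {set {set V}}) (O O' : ormap I) : Prop :=
  O <> O' /\
  exists i j : V, (val i < val j)%N /\
    forall H : edge I,
      (O H <> O' H -> O H = i /\ O' H = j) /\
      (i \in val H -> j \in val H -> (O H = i <-> O' H = j)).

Definition flip_rel (I : {set {set V}}) : relation (ormap I) :=
  fun O O' => acyc_or O /\ acyc_or O' /\ incr_flip O O'.

Definition P_le (I : {set {set V}}) (O O' : ormap I) : Prop :=
  acyc_or O /\ acyc_or O' /\ clos_refl_trans (ormap I) (@flip_rel I) O O'.

Definition P_lt (I : {set {set V}}) (O O' : ormap I) : Prop :=
  P_le O O' /\ O <> O'.

Definition covers (I : {set {set V}}) (O O' : ormap I) : Prop :=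
  P_lt O' O /\ ~ exists Z, P_lt O' Z /\ P_lt Z O.

Definition join_irreducible (I : {set {set V}}) (O : ormap I) : Prop :=
  acyc_or O /\
  ~ (forall Z, acyc_or Z -> P_le O Z) /\
  exists O', covers O O' /\ forall O'', covers O O'' -> O'' = O'.

(* J_I = union of I \ {min I} *)
Definition in_JI (I : {set {set V}}) (j : V) : Prop :=
  exists2 H, H \in I & (j \in H) && (j != minset j H).

Definition Jj (I : {set {set V}}) (j : V) : {set V} :=
  \bigcap_(H in I | (j \in H) && (j != minset j H)) H.

Definition mu (I : {set {set V}}) (j : V) : V := minset j (Jj I j).

Definition A_fun (I : {set {set V}}) (j : V) (J : {set V}) : V :=
  if (j \in J) && (minset j J == mu I j) then j else minset j J.

Definition A_or (I : {set {set V}}) (j : V) : ormap I :=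
  [ffun H : edge I => A_fun I j (val H)].

End Defs.

(* Main.v *)
Require Import Defs.
From mathcomp Require Import all_boot.
From mathcomp Require Import zify.
From Stdlib Require Import Relations Classical.
Require Import Defs.

Set Implicit Arguments.
Unset Strict Implicit.
Unset Printing Implicit Defensive.

Section Proof5.
Variable n : nat.
Notation V := 'I_n.

Lemma minsetP (d : V) (A : {set V}) : A != set0 ->
  minset d A \in A /\ forall k, k \in A -> (nat_of_ord (minset d A) <= nat_of_ord k)%N.
Proof.
move=> /set0Pn [x xA]; rewrite /minset.
case: pickP => [i /andP [iA /forall_inP H] | H] /=.
  by split => // k kA; apply: H.
exfalso.
case: (arg_minnP (fun i : V => nat_of_ord i) xA) => i iA imin.
have iA2 : i \in A := iA. have Hi := H i. move: Hi; rewrite /= iA2 /= => /negP; apply; apply/forall_inP => k kA; exact: imin.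
Qed.

Variable I : {set {set V}}.
Hypothesis hI : interval_hypergraph I.
Hypothesis hC : closed_under_intersection I.
Variable j : V.
Hypothesis hJ : in_JI I j.

Notation m H := (minset j (val H)).
Notation mu := (mu I j).
Notation S H := ((j \in val H) && (minset j (val H) == mu)).

Definition X (a : V) : ormap I :=
  [ffun H : edge I => if S H then a else m H].

Lemma edge_ne (H : edge I) : val H != set0.
Proof. exact: (hI.1 _ (valP H)).1. Qed.

Lemma edge_int (H : edge I) (x y z : V) : x \in val H -> z \in val H ->
  (x <= y)%N -> (y <= z)%N -> y \in val H.
Proof. exact: (hI.1 _ (valP H)).2. Qed.

Lemma mH_in (H : edge I) : m H \in val H.
Proof. exact: (minsetP j (edge_ne H)).1. Qed.

Lemma mH_le (H : edge I) k : k \in val H -> (nat_of_ord (m H) <= nat_of_ord k)%N.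
Proof. exact: (minsetP j (edge_ne H)).2. Qed.

Lemma j_in_Jj : j \in Jj I j.
Proof. by apply/bigcapP => H /andP [_ /andP []]. Qed.

Lemma Jj_sub (H : {set V}) : H \in I -> (j \in H) && (j != minset j H) ->
  Jj I j \subset H.
Proof. move=> HI HF; apply: (bigcap_inf H); by rewrite HI HF. Qed.

Lemma Jj_in_I : Jj I j \in I.
Proof.
case: hJ => H0 H0I H0F.
have : Jj I j = setT \/ (Jj I j \in I /\ j \in Jj I j).
  rewrite /Jj; apply: (big_rec (fun x => x = setT \/ (x \in I /\ j \in x))).
    by left.
  move=> i x /andP [iI /andP [ji _]] [-> | [xI jx]].
    by right; rewrite setIT.
  right; split; last by rewrite inE ji jx.
  apply: hC => //; apply/set0Pn; exists j; by rewrite inE ji jx.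
case => [JT | [] //].
have : H0 = setT.
  apply/setP => x; rewrite inE; apply: (subsetP (Jj_sub H0I H0F)); by rewrite JT inE.
by move=> e; rewrite JT -e.
Qed.

Lemma mu_in : mu \in Jj I j.
Proof.
have ne : Jj I j != set0 by apply/set0Pn; exists j; exact: j_in_Jj.
exact: (minsetP j ne).1.
Qed.

Lemma mu_le k : k \in Jj I j -> (nat_of_ord mu <= nat_of_ord k)%N.
Proof.
have ne : Jj I j != set0 by apply/set0Pn; exists j; exact: j_in_Jj.
exact: (minsetP j ne).2.
Qed.

Lemma F_lt (H : edge I) : (j \in val H) && (j != m H) -> (nat_of_ord (m H) < nat_of_ord j)%N.
Proof.
case/andP => jH ne; rewrite ltn_neqAle mH_le // andbT.
apply/negP => /eqP e; move/negP: ne; apply; apply/eqP; exact: val_inj.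
Qed.

Lemma F_mu (H : edge I) : (j \in val H) && (j != m H) -> (nat_of_ord (m H) <= nat_of_ord mu)%N.
Proof.
move=> hF; apply: mH_le; apply: (subsetP (Jj_sub (valP H) hF)); exact: mu_in.
Qed.

Lemma mu_lt_j : (nat_of_ord mu < nat_of_ord j)%N.
Proof.
case: hJ => H0 H0I H0F.
pose E : edge I := exist _ H0 H0I.
have lt0 := F_lt (H:=E) H0F.
have pn : (j.-1 < n)%N by apply: leq_ltn_trans (leq_pred _) (ltn_ord j).
pose p : V := Ordinal pn.
have : p \in Jj I j.
  apply/bigcapP => H /andP [HI HF].
  pose E' : edge I := exist _ H HI.
  have lt1 := F_lt (H:=E') HF.
  apply: (edge_int (H:=E') (x:=m E') (z:=j)); [exact: mH_in | by case/andP: HF | | ] => /=; move: lt1 => /= lt1; lia.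
move/mu_le => /= h; move: lt0 => /= lt0; lia.
Qed.

Definition E0 : edge I := exist _ (Jj I j) Jj_in_I.

Lemma S_E0 : S E0.
Proof. by rewrite /= j_in_Jj /=. Qed.

Lemma XE0 a : X a E0 = a.
Proof. by rewrite ffunE S_E0. Qed.

Lemma X_inj a b : X a = X b -> a = b.
Proof. by move=> e; rewrite -(XE0 a) -(XE0 b) e. Qed.

Lemma X_S a (H : edge I) : S H -> X a H = a.
Proof. by move=> h; rewrite ffunE h. Qed.

Lemma X_notS a (H : edge I) : ~~ S H -> X a H = m H.
Proof. by move=> h; rewrite ffunE (negbTE h). Qed.

Lemma S_int (H : edge I) (x : V) : S H -> (nat_of_ord mu <= nat_of_ord x)%N -> (nat_of_ord x <= nat_of_ord j)%N ->
  x \in val H.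
Proof.
case/andP => jH /eqP e h1 h2.
apply: (edge_int (x:=m H) (z:=j)) => //; [exact: mH_in | by rewrite e].
Qed.

Lemma X_orient a : (nat_of_ord mu <= nat_of_ord a)%N -> (nat_of_ord a <= nat_of_ord j)%N -> is_orientation (X a).
Proof.
move=> h1 h2 H; rewrite ffunE; case: ifP => hS; [exact: S_int | exact: mH_in].
Qed.

Lemma acyc_rank (O : ormap I) (r : V -> nat) : injective r ->
  (forall (H : edge I) x, x \in val H -> (r (O H) <= r x)%N) -> acyclic O.
Proof.
move=> ri rmin [s [hs cyc]].
have step : forall H H', orrel O H H' -> (r (O H) < r (O H'))%N.
  move=> H H' /andP [inH ne]; rewrite ltn_neqAle rmin // andbT.
  apply/negP => /eqP e; move/negP: ne; apply; apply/eqP; symmetry; exact: ri.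
have key : forall x p, path (orrel O) x p -> p != [::] -> (r (O x) < r (O (last x p)))%N.
  move=> x p; elim: p x => [//|y p IH] x /= /andP [exy pp] _.
  case: p IH pp => [|z p'] IH pp /=; first exact: step.
  exact: ltn_trans (step _ _ exy) (IH y pp isT).
case: s hs cyc => [//|x p] _ /= cyc.
have ne : rcons p x != [::] by case: p {cyc}.
by have := key _ _ cyc ne; rewrite last_rcons ltnn.
Qed.

Lemma Xmu_eq (H : edge I) : X mu H = m H.
Proof. rewrite ffunE; case: ifP => // /andP [_ /eqP ->] //. Qed.

Lemma acyc_mu : acyclic (X mu).
Proof.
apply: (@acyc_rank _ (fun x : V => nat_of_ord x)); first exact: ord_inj.
move=> H x xH; rewrite Xmu_eq; exact: mH_le.
Qed.

Lemma acyc_j : acyclic (X j).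
Proof.
have mlj := mu_lt_j.
pose r (x : V) := if x == j then (2 * nat_of_ord mu)%N else (2 * nat_of_ord x + 1)%N.
apply: (@acyc_rank _ r).
  move=> x y; rewrite /r; case: (x =P j) => [->|xj]; case: (y =P j) => [->|yj] //; try lia.
  move=> e; apply: ord_inj; lia.
move=> H x xH; rewrite /r.
case: (boolP (S H)) => hS.
  rewrite X_S // eqxx; case: (x =P j) => // _.
  case/andP: hS => _ /eqP e; have := mH_le xH; rewrite e; lia.
rewrite X_notS //.
have mx := mH_le xH.
case: (m H =P j) => [mj | mnj].
  case: (x =P j) => // _; rewrite mj in mx; lia.
case: (x =P j) => [xj | _]; last lia.
subst x.
have hF : (j \in val H) && (j != m H).
  rewrite xH /=; apply/eqP => e; by apply: mnj.
have := F_mu hF.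
have ne : m H != mu by move: hS; rewrite xH.
 rewrite leq_eqVlt; case/orP => [/eqP e|]; last lia.
by move: ne; rewrite (ord_inj e) eqxx.
Qed.

Lemma flip_back (Y : ormap I) a : (nat_of_ord mu <= nat_of_ord a)%N -> (nat_of_ord a <= nat_of_ord j)%N ->
  flip_rel Y (X a) -> exists b : V, [/\ (nat_of_ord mu <= nat_of_ord b)%N, (nat_of_ord b < nat_of_ord a)%N & Y = X b].
Proof.
move=> h1 h2 [[oY _] [_ [neq [i0 [j0 [lt h]]]]]].
change (is_true (nat_of_ord i0 < nat_of_ord j0)%N) in lt.
case: (boolP [exists H, Y H != X a H]) => [/existsP [H0 hH0] | /existsPn hall]; last first.
  by exfalso; apply: neq; apply/ffunP => H; apply/eqP; move: (hall H); rewrite negbK.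
have [e1 e2] := (h H0).1 (fun e => (negP hH0) (introT eqP e)).
have hS0 : S H0.
  apply/negPn/negP => nS; move: e2; rewrite X_notS // => e2.
  have := mH_le (oY H0); rewrite e1 e2; lia.
move: e2; rewrite X_S // => ej0; subst j0.
have mui0 : (nat_of_ord mu <= nat_of_ord i0)%N.
  case/andP: hS0 => _ /eqP <-; rewrite -e1; exact: mH_le (oY H0).
exists i0; split => //; apply/ffunP => H.
case: (boolP (S H)) => hS.
  rewrite (X_S _ hS); apply/((h H).2 _ _).2; last exact: X_S.
    by apply: S_int => //; lia.
  exact: S_int.
rewrite (X_notS _ hS); case: (Y H =P X a H) => [-> | ne]; first exact: X_notS.
have [f1 f2] := (h H).1 ne.
move: f2; rewrite X_notS // => f2.
have := mH_le (oY H); rewrite f1 f2; lia.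
Qed.

Lemma downset (Y Z : ormap I) : clos_refl_trans _ (@flip_rel n I) Y Z ->
  forall a, (nat_of_ord mu <= nat_of_ord a)%N -> (nat_of_ord a <= nat_of_ord j)%N -> Z = X a ->
  exists b : V, [/\ (nat_of_ord mu <= nat_of_ord b)%N, (nat_of_ord b <= nat_of_ord a)%N & Y = X b].
Proof.
move=> crt; have {crt} := @clos_rt_rt1n _ _ _ _ crt; elim => [x | x y z fxy _ IH] a h1 h2 e.
  by exists a; split.
case: (IH a h1 h2 e) => b [b1 b2 eb].
rewrite eb in fxy.
case: (flip_back b1 (leq_trans b2 h2) fxy) => c [c1 c2 ec].
exists c; split => //; lia.
Qed.

Lemma flip_fwd b a : (nat_of_ord mu <= nat_of_ord b)%N -> (nat_of_ord b < nat_of_ord a)%N -> (nat_of_ord a <= nat_of_ord j)%N ->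
  acyc_or (X b) -> acyc_or (X a) -> flip_rel (X b) (X a).
Proof.
move=> h1 h2 h3 ab aa; split => //; split => //; split.
  move/X_inj => e; move: h2; rewrite e; lia.
exists b, a; split => // H; split.
  case: (boolP (S H)) => hS; first by rewrite !X_S.
  by rewrite !X_notS.
move=> bH aH.
case: (boolP (S H)) => hS; first by rewrite !X_S.
rewrite !X_notS //; split => e.
  exfalso; apply: aa.2; exists [:: E0; H]; split => //=.
  rewrite /orrel !XE0 X_notS // e.
  have bE : b \in val E0 by apply: S_int => //; [exact: S_E0 | lia].
  rewrite bE aH /=.
  have ne : b != a by apply/eqP => eba; move: h2; rewrite eba; lia.
  by rewrite ne eq_sym ne.
have := mH_le bH; rewrite e; lia.
Qed.

Lemma ex_max_lt (P : nat -> Prop) N : (exists m, (m < N)%N /\ P m) ->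
  exists k, [/\ (k < N)%N, P k & forall m, (m < N)%N -> P m -> (m <= k)%N].
Proof.
elim: N => [[m' [//]]|N IH] [m' [hm pm]].
case: (classic (P N)) => PN.
  by exists N; split => // m'' hm'' _.
have lt : forall x, (x < N.+1)%N -> P x -> (x < N)%N.
  move=> x hx px; rewrite ltnS leq_eqVlt in hx; case/orP: hx => [/eqP e|//].
  by subst x.
case: (IH (ex_intro _ m' (conj (lt _ hm pm) pm))) => k [hk pk kmax].
exists k; split => //; first exact: ltnW.
move=> x hx px; apply: kmax => //; exact: lt.
Qed.

Lemma main : join_irreducible (A_or I j).
Proof.
have -> : A_or I j = X j by apply/ffunP => H; rewrite !ffunE.
have mlj := mu_lt_j.
have acj : acyc_or (X j) by split; [apply: X_orient => //; lia | exact: acyc_j].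
have ac0 : acyc_or (X mu) by split; [apply: X_orient => //; lia | exact: acyc_mu].
split => //; split.
  move=> hall; case: (hall _ ac0) => _ [_ crt].
  case: (downset crt (a:=mu) (leqnn _) (ltnW mlj) erefl) => b [b1 b2 e].
  move: (X_inj e) => ejb; subst b; lia.
pose P (k : nat) := exists a : V, [/\ nat_of_ord a = k, (nat_of_ord mu <= nat_of_ord a)%N & acyclic (X a)].
case: (@ex_max_lt P (nat_of_ord j)).
  by exists (nat_of_ord mu); split => //; rewrite /P; exists mu; split => //; exact: acyc_mu.
move=> k [hk [ak [eak muak acak]] kmax]; subst k.
have ack : acyc_or (X ak) by split => //; apply: X_orient => //; lia.
have key : forall Z, P_lt Z (X j) -> exists b : V,
    [/\ (nat_of_ord mu <= nat_of_ord b)%N, (nat_of_ord b <= nat_of_ord ak)%N, Z = X b & acyc_or (X b)].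
  move=> Z [[aZ [_ crt]] neZ].
  case: (downset crt (a:=j) (ltnW mlj) (leqnn _) erefl) => b [b1 b2 eb].
  have bj : (nat_of_ord b < nat_of_ord j)%N.
    rewrite ltn_neqAle b2 andbT; apply/negP => /eqP e.
    by apply: neZ; rewrite eb (ord_inj e).
  exists b; split => //; last by rewrite -eb.
  apply: kmax => //; exists b; split => //; rewrite -eb; exact: aZ.2.
have ltk : P_lt (X ak) (X j).
  split; first (split => //; split => //; apply: rt_step; apply: flip_fwd => //; lia).
  by move/X_inj => e; move: hk; rewrite e; lia.
exists (X ak); split.
  split => //; case => Z [[lekZ neqkZ] ltZj].
  case: (key _ ltZj) => b [b1 b2 eb ab]; subst Z.
  case: lekZ => _ [_ crt].
  case: (downset crt b1 (leq_trans b2 (ltnW hk)) erefl) => c [c1 c2 ec].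
  move: (X_inj ec) => e; subst c.
  by apply: neqkZ; congr (X _); apply: ord_inj; apply/eqP; rewrite eqn_leq c2 b2.
move=> O'' [ltO nob].
case: (key _ ltO) => b [b1 b2 eb ab]; subst O''.
move: b2; rewrite leq_eqVlt; case/orP => [/eqP e | blt]; first by rewrite (ord_inj e).
exfalso; apply: nob; exists (X ak); split => //.
split; first (split => //; split => //; apply: rt_step; apply: flip_fwd => //; lia).
by move/X_inj => e; move: blt; rewrite e; lia.
Qed.

End Proof5.

Theorem proposition5p18 (n : nat) (I : {set {set 'I_n}}) :
  interval_hypergraph I -> closed_under_intersection I ->
  forall j : 'I_n, in_JI I j -> join_irreducible (A_or I j).
Proof. move=> hI hC j hJ; exact: main. Qed.
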